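(* Under the standing setting below, take $\rho(x,y)=\|\nabla h(x,y)\|^2$ and $C_0>0$. For an integer $K\ge1$ set $\alpha=K^{-1/3}$ and $\gamma=\min\{\alpha,\frac{1}{L_f+\alpha L_h}\}$, let $(x_0,y_0)$ satisfy $h(x_0,y_0)\le\alpha^2C_0$, and run the Algorithm. Then there is a constant $c>0$ depending only on $L_f,L_h,C_f,C_0,\bar f$ and an upper bound on $f(x_0,y_0)$ (not on $K$) such that $$\frac1K\sum_{k=0}^{K-1}\big(\|\Delta_k^x\|^2+\|\Delta_k^y\|^2\big)\le cK^{-2/3},\qquad \frac1K\sum_{k=0}^{K-1}\|\nabla h_k\|^2\le cK^{-2/3}.$$ Consequently, for every $\epsilon>0$ there is $K=\mathcal{O}(\epsilon^{-3/2})$ such that some $t\in\{0,\dots,K-1\}$ satisfies $\max\{\|\nabla h_t\|^2,\|\nabla f_t+\lambda_t\nabla h_t\|^2\}\le\epsilon$.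
   Context: Standing setting. $f,g:\mathbb{R}^n\times\mathbb{R}^m\to\mathbb{R}$. $f$ is continuously differentiable, $\bar f:=\inf_{(x,y)}f(x,y)>-\infty$, $\nabla f$ is $L_f$-Lipschitz, and $\|\nabla f(x,y)\|\le C_f$ for all $(x,y)$. $g$ is twice continuously differentiable, and $h(x,y):=\|\nabla_y g(x,y)\|^2$ is continuously differentiable with $\nabla h$ being $L_h$-Lipschitz ($L_h>0$). Write $\nabla h=(\nabla_x h,\nabla_y h)$, $f_k=f(x_k,y_k)$, $h_k=h(x_k,y_k)$, $\nabla f_k=\nabla f(x_k,y_k)$, $\nabla h_k=\nabla h(x_k,y_k)$, etc. Given $\rho:\mathbb{R}^n\times\mathbb{R}^m\to\mathbb{R}_{\ge0}$, $\alpha,\gamma>0$, $(x_0,y_0)$, the Algorithm iterates for $k\ge0$: $\lambda_k=\big[-\nabla_x h_k^\top\nabla_x f_k-\nabla_y h_k^\top\nabla_y f_k+\alpha\rho(x_k,y_k)\big]_+/(\|\nabla_x h_k\|^2+\|\nabla_y h_k\|^2)$ if $\nabla h_k\ne0$ and $\lambda_k=0$ otherwise ($[t]_+=\max\{0,t\}$); $\Delta_k^x=-\nabla_x f_k-\lambda_k\nabla_x h_k$, $\Delta_k^y=-\nabla_y f_k-\lambda_k\nabla_y h_k$; $x_{k+1}=x_k+\gamma\Delta_k^x$, $y_{k+1}=y_k+\gamma\Delta_k^y$. Note $\nabla f_k+\lambda_k\nabla h_k=-(\Delta_k^x,\Delta_k^y)$. *)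

(* Defs.v *)
From HB Require Import structures.
From mathcomp Require Import all_boot all_order all_algebra.
From mathcomp Require Import all_classical all_reals all_analysis.
Set Implicit Arguments. Unset Strict Implicit. Unset Printing Implicit Defensive.
Import Order.TTheory GRing.Theory Num.Theory.
Import numFieldNormedType.Exports.
Local Open Scope ring_scope.

Section Defs.
Variable R : realType.

Definition dotv n (u v : 'rV[R]_n) : R := \sum_(i < n) u 0 i * v 0 i.
Definition sqn n (u : 'rV[R]_n) : R := dotv u u.
Definition enorm2 n m (p : 'rV[R]_n * 'rV[R]_m) : R := Num.sqrt (sqn p.1 + sqn p.2).

Definition has_gradient n m (F : 'rV[R]_n * 'rV[R]_m -> R)
    (Gx : 'rV[R]_n * 'rV[R]_m -> 'rV[R]_n) (Gy : 'rV[R]_n * 'rV[R]_m -> 'rV[R]_m) :=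
  forall p, differentiable F p /\
    forall v : 'rV[R]_n * 'rV[R]_m, 'd F p v = dotv (Gx p) v.1 + dotv (Gy p) v.2.

Definition C1map n m k (F : 'rV[R]_n * 'rV[R]_m -> 'rV[R]_k) :=
  (forall p, differentiable F p) /\
  (forall v : 'rV[R]_n * 'rV[R]_m, continuous (fun p => 'd F p v)).

Definition lipschitz_grad n m (L : R)
    (Gx : 'rV[R]_n * 'rV[R]_m -> 'rV[R]_n) (Gy : 'rV[R]_n * 'rV[R]_m -> 'rV[R]_m) :=
  forall p q, enorm2 (Gx p - Gx q, Gy p - Gy q) <= L * enorm2 (p.1 - q.1, p.2 - q.2).

(* The Algorithm. Gfx, Gfy: gradient of f; Hx, Hy: gradient of h. *)
Section Algo.
Variables (n m : nat).
Variables (Gfx Hx : 'rV[R]_n * 'rV[R]_m -> 'rV[R]_n)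
          (Gfy Hy : 'rV[R]_n * 'rV[R]_m -> 'rV[R]_m).
Variables (rho : 'rV[R]_n * 'rV[R]_m -> R) (alpha gamma : R).

Definition alg_lambda (p : 'rV[R]_n * 'rV[R]_m) : R :=
  if (Hx p != 0) || (Hy p != 0) then
    Num.max 0 (- dotv (Hx p) (Gfx p) - dotv (Hy p) (Gfy p) + alpha * rho p)
      / (sqn (Hx p) + sqn (Hy p))
  else 0.

Definition alg_Dx (p : 'rV[R]_n * 'rV[R]_m) : 'rV[R]_n :=
  - Gfx p - alg_lambda p *: Hx p.
Definition alg_Dy (p : 'rV[R]_n * 'rV[R]_m) : 'rV[R]_m :=
  - Gfy p - alg_lambda p *: Hy p.

Fixpoint alg_iter (x0 : 'rV[R]_n) (y0 : 'rV[R]_m) (k : nat) : 'rV[R]_n * 'rV[R]_m :=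
  match k with
  | 0%N => (x0, y0)
  | k'.+1 => let p := alg_iter x0 y0 k' in
             (p.1 + gamma *: alg_Dx p, p.2 + gamma *: alg_Dy p)
  end.
End Algo.
End Defs.

(* Main.v *)
Require Import Defs.
From HB Require Import structures.
From mathcomp Require Import all_boot all_order all_algebra.
From mathcomp Require Import all_classical all_reals all_analysis.
From mathcomp Require Import ring lra.
Import Order.TTheory GRing.Theory Num.Theory.
Import numFieldNormedType.Exports.
Local Open Scope ring_scope.
Set Implicit Arguments. Unset Strict Implicit. Unset Printing Implicit Defensive.

Section Aux.
Variable R : realType.
Implicit Types (n : nat).

Lemma dotvC n (u v : 'rV[R]_n) : dotv u v = dotv v u.
Proof. by apply: eq_bigr => i _; rewrite mulrC. Qed.
Lemma dotvDl n (u v w : 'rV[R]_n) : dotv (u + v) w = dotv u w + dotv v w.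
Proof. by rewrite /dotv -big_split; apply: eq_bigr => i _; rewrite mxE mulrDl. Qed.
Lemma dotvZl n k (u w : 'rV[R]_n) : dotv (k *: u) w = k * dotv u w.
Proof. by rewrite /dotv mulr_sumr; apply: eq_bigr => i _; rewrite mxE mulrA. Qed.
Lemma dotvNl n (u w : 'rV[R]_n) : dotv (- u) w = - dotv u w.
Proof. by rewrite -scaleN1r dotvZl mulN1r. Qed.
Lemma dotvBl n (u v w : 'rV[R]_n) : dotv (u - v) w = dotv u w - dotv v w.
Proof. by rewrite dotvDl dotvNl. Qed.
Lemma dotvDr n (u v w : 'rV[R]_n) : dotv w (u + v) = dotv w u + dotv w v.
Proof. by rewrite dotvC dotvDl !(dotvC w). Qed.
Lemma dotvZr n k (u w : 'rV[R]_n) : dotv w (k *: u) = k * dotv w u.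
Proof. by rewrite dotvC dotvZl dotvC. Qed.
Lemma dotvNr n (u w : 'rV[R]_n) : dotv w (- u) = - dotv w u.
Proof. by rewrite dotvC dotvNl dotvC. Qed.
Lemma dotvBr n (u v w : 'rV[R]_n) : dotv w (u - v) = dotv w u - dotv w v.
Proof. by rewrite dotvDr dotvNr. Qed.
Lemma sqn_ge0 n (u : 'rV[R]_n) : 0 <= sqn u.
Proof. by apply: sumr_ge0 => i _; rewrite -expr2 sqr_ge0. Qed.
Lemma sqn_eq0 n (u : 'rV[R]_n) : sqn u = 0 -> u = 0.
Proof.
move=> /eqP; rewrite /sqn /dotv psumr_eq0; last by move=> i _; rewrite -expr2 sqr_ge0.
move=> /allP H; apply/rowP => i; rewrite mxE.
by have := H i (mem_index_enum i); rewrite /= -expr2 sqrf_eq0 => /eqP.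
Qed.
Lemma dotv0l n (u : 'rV[R]_n) : dotv 0 u = 0.
Proof. by rewrite -(scale0r (0 : 'rV[R]_n)) dotvZl mul0r. Qed.

Definition pdot n m (p q : 'rV[R]_n * 'rV[R]_m) := dotv p.1 q.1 + dotv p.2 q.2.
Definition psq n m (p : 'rV[R]_n * 'rV[R]_m) := pdot p p.

Lemma psq_ge0 n m (p : 'rV[R]_n * 'rV[R]_m) : 0 <= psq p.
Proof. by rewrite /psq /pdot addr_ge0 // sqn_ge0. Qed.
Lemma enorm2E n m (p : 'rV[R]_n * 'rV[R]_m) : enorm2 p = Num.sqrt (psq p).
Proof. by []. Qed.
Lemma enorm2_sq n m (p : 'rV[R]_n * 'rV[R]_m) : enorm2 p ^+ 2 = psq p.
Proof. by rewrite enorm2E sqr_sqrtr // psq_ge0. Qed.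
Section P.
Variables n m : nat.
Implicit Types p q r : 'rV[R]_n * 'rV[R]_m.
Lemma pdotC p q : pdot p q = pdot q p.
Proof. by rewrite /pdot dotvC (dotvC p.2). Qed.
Lemma pdotDl p q r : pdot (p + q) r = pdot p r + pdot q r.
Proof. rewrite /pdot /= !dotvDl; ring. Qed.
Lemma pdotZl k p r : pdot (k *: p) r = k * pdot p r.
Proof. rewrite /pdot /= !dotvZl; ring. Qed.
Lemma pdotNl p r : pdot (- p) r = - pdot p r.
Proof. rewrite /pdot /= !dotvNl; ring. Qed.
Lemma pdotBl p q r : pdot (p - q) r = pdot p r - pdot q r.
Proof. by rewrite pdotDl pdotNl. Qed.
Lemma pdotDr p q r : pdot r (p + q) = pdot r p + pdot r q.
Proof. by rewrite pdotC pdotDl !(pdotC r). Qed.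
Lemma pdotZr k p r : pdot r (k *: p) = k * pdot r p.
Proof. by rewrite pdotC pdotZl pdotC. Qed.
Lemma pdotNr p r : pdot r (- p) = - pdot r p.
Proof. by rewrite pdotC pdotNl pdotC. Qed.
Lemma pdotBr p q r : pdot r (p - q) = pdot r p - pdot r q.
Proof. by rewrite pdotDr pdotNr. Qed.
Lemma psq_eq0 p : psq p = 0 -> p = 0.
Proof.
case: p => a b; rewrite /psq /pdot /= => /eqP; rewrite paddr_eq0 ?sqn_ge0 //.
by case/andP => /eqP/sqn_eq0 -> /eqP/sqn_eq0 ->.
Qed.
Lemma pdot0l r : pdot 0 r = 0.
Proof. by rewrite /pdot /= !dotv0l addr0. Qed.

Lemma CS p q : pdot p q <= Num.sqrt (psq p) * Num.sqrt (psq q).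
Proof.
have [A0|Apos] := eqVneq (psq p) 0.
  by rewrite (psq_eq0 A0) pdot0l mulr_ge0 ?sqrtr_ge0.
have Agt0 : 0 < psq p by rewrite lt_def Apos psq_ge0.
set A := psq p; set B := psq q; set X := pdot p q.
have H := psq_ge0 (A *: q - X *: p).
rewrite /psq pdotBl !pdotBr !pdotZl !pdotZr -/B -/A (pdotC q p) -/X in H.
have HX : X ^+ 2 <= A * B.
  have : 0 <= A * (A * B - X ^+ 2) by apply: (le_trans H); rewrite le_eqVlt; apply/orP; left; apply/eqP; rewrite /A /B /X /psq; ring.
  by rewrite pmulr_rge0 // subr_ge0.
rewrite -sqrtrM // ?psq_ge0 //.
apply: le_trans (ler_norm X) _.
by rewrite -sqrtr_sqr ler_sqrt // mulr_ge0 // ?psq_ge0 // ltW.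
Qed.

Lemma amgm p q s : 0 < s -> - (2 * pdot p q) <= s * psq p + psq q / s.
Proof.
move=> s0; have H := psq_ge0 (s *: p + q).
rewrite /psq pdotDl !pdotDr !pdotZl !pdotZr (pdotC q p) in H.
rewrite -subr_ge0.
have -> : s * psq p + psq q / s - - (2 * pdot p q) = s^-1 * (s * (s * pdot p p) + s * pdot p q + (s * pdot p q + pdot q q)).
  rewrite /psq; field; by rewrite gt_eqF.
by rewrite mulr_ge0 // invr_ge0 ltW.
Qed.
End P.
Lemma dphi n m (F : 'rV[R]_n * 'rV[R]_m -> R) Gx Gy p d (t : R) :
  has_gradient F Gx Gy ->
  is_derive t 1 (fun t : R => F (p + t *: d)) (pdot (Gx (p + t *: d), Gy (p + t *: d)) d).
Proof.
move=> hg.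
set phi := fun t : R => F (p + t *: d).
set q := p + t *: d.
have e : (fun h : R => h^-1 *: ((phi \o shift t) (h *: 1) - phi t)) =
         (fun h : R => h^-1 *: ((F \o shift q) (h *: d) - F q)).
  apply/funext => h /=; rewrite /phi /q; congr (_ *: (F _ - _)).
  by rewrite -[h%:A]/(h * 1) mulr1 scalerDl addrCA.
have [dF gF] := hg q.
split.
  by rewrite /derivable e; apply: diff_derivable.
by rewrite /derive e -/(derive F q d) deriveE.
Qed.
Lemma descent n m (F : 'rV[R]_n * 'rV[R]_m -> R) Gx Gy L p d :
  has_gradient F Gx Gy -> lipschitz_grad L Gx Gy -> 0 <= L ->
  F (p + d) <= F p + pdot (Gx p, Gy p) d + L / 2 * psq d.
Proof.
move=> hg hl L0.
set a0 := pdot (Gx p, Gy p) d; set N := psq d; set c := L / 2 * N.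
set phi := fun t : R => F (p + t *: d).
pose psi : R -> R := phi - (a0 \*: (@id R)) - (c \*: ((@id R) ^+ 2)).
pose dpsi : R -> R := fun t : R => pdot (Gx (p + t *: d), Gy (p + t *: d)) d - a0 *: 1
     - c *: ((2%:R * t ^+ 1) *: 1).
have Hd : forall t : R, is_derive t (1:R) psi (dpsi t).
  move=> t; have := dphi p d t hg => H.
  rewrite /psi /dpsi; exact: _.
have [t t01 Ht] := MVT ltr01 (fun t _ => Hd t)
   (derivable_within_continuous (fun t _ => @ex_derive _ _ _ _ _ _ _ (Hd t))).
have Hle : dpsi t <= 0.
  have t0 : 0 < t by move: t01; rewrite in_itv /= => /andP[].
  set q := p + t *: d.
  have -> : dpsi t = pdot (Gx q - Gx p, Gy q - Gy p) d - L * N * t.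
    rewrite /dpsi /a0 /c /N /q.
    change (pdot (Gx q, Gy q) d - pdot (Gx p,Gy p) d * 1 - L/2 * psq d * ((2 * t^+1) * 1) =
      pdot (Gx q - Gx p, Gy q - Gy p) d - L * psq d * t).
    by rewrite /pdot /= !dotvBl; field.
  rewrite subr_le0.
  apply: (le_trans (CS _ _)).
  have hq := hl q p.
  have E1 : (q.1 - p.1, q.2 - p.2) = t *: d.
    by rewrite /q /=; congr (_, _); rewrite addrC addKr.
  have E2 : enorm2 (t *: d) = t * Num.sqrt N.
    rewrite enorm2E /psq pdotZl pdotZr -/(psq d) -/N mulrA sqrtrM ?mulr_ge0 ?ltW //.
      by rewrite -expr2 sqrtr_sqr gtr0_norm.
  rewrite E1 E2 enorm2E in hq.
  have N0 : 0 <= N by apply: psq_ge0.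
  apply: (le_trans (ler_wpM2r (sqrtr_ge0 N) hq)).
  have S : Num.sqrt N * Num.sqrt N = N by rewrite -expr2 sqr_sqrtr.
  rewrite -/N.
  by have -> : L * N * t = L * (t * Num.sqrt N) * Num.sqrt N by rewrite -[in LHS]S; ring.
have H1 : psi 1 - psi 0 <= 0 by rewrite Ht subr0 mulr1.
rewrite /psi /phi !fctE /= in H1.
move: H1; rewrite -[a0%:A]/(a0 * 1) -[c *: 1 ^+ 2]/(c * 1 ^+ 2)
  -[a0 *: 0]/(a0 * 0) -[c *: 0 ^+ 2]/(c * 0 ^+ 2) expr1n expr0n /= !mulr0 !mulr1 !subr0.
by rewrite scale1r scale0r addr0; lra.
Qed.
Definition rhoF n m (Hx : 'rV[R]_n * 'rV[R]_m -> 'rV[R]_n) (Hy : 'rV[R]_n * 'rV[R]_m -> 'rV[R]_m) p :=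
  sqn (Hx p) + sqn (Hy p).

Lemma lam_facts n m (Gfx Hx : 'rV[R]_n * 'rV[R]_m -> 'rV[R]_n)
    (Gfy Hy : 'rV[R]_n * 'rV[R]_m -> 'rV[R]_m) (al : R) p :
  let lam := alg_lambda Gfx Hx Gfy Hy (rhoF Hx Hy) al p in
  let gh := (Hx p, Hy p) in let gf := (Gfx p, Gfy p) in
  0 <= lam /\ al * psq gh - pdot gh gf <= lam * psq gh /\
  lam * (lam * psq gh + pdot gh gf - al * psq gh) = 0.
Proof.
move=> lam gh gf; rewrite /lam /alg_lambda.
have E : rhoF Hx Hy p = psq gh by [].
case: ifP => H.
- have rpos : 0 < psq gh.
    rewrite lt_def psq_ge0 andbT; apply/eqP => /psq_eq0 [].
    by move: H => /orP [] /eqP.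
  rewrite E.
  have -> : - dotv (Hx p) (Gfx p) - dotv (Hy p) (Gfy p) + al * psq gh =
            al * psq gh - pdot gh gf by rewrite /pdot /=; ring.
  set X := al * psq gh - pdot gh gf.
  rewrite divfK ?gt_eqF //.
  split; first by apply: divr_ge0; [rewrite le_max lexx | exact: ltW rpos].
  split; first by rewrite le_max lexx orbT.
  have [X0|X0] := leP X 0.
    by rewrite !mul0r.
  rewrite /X; apply/eqP; rewrite mulf_eq0; apply/orP; right; apply/eqP; ring.
- move/negbT: H; rewrite negb_or !negbK => /andP [/eqP h1 /eqP h2].
  have -> : psq gh = 0 by rewrite /psq /pdot /gh /= h1 h2 !dotv0l addr0.
  have -> : pdot gh gf = 0 by rewrite /pdot /gh /= h1 h2 !dotv0l addr0.
  by rewrite !mul0r mulr0 subr0 lexx.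
Qed.
Lemma real_step (a b r lam al ga Lf Lh C2 f0 f1 h0 h1 D : R) :
 0 <= a -> a <= C2 -> 0 <= r -> 0 <= lam -> al*r - b <= lam*r -> lam*(lam*r + b - al*r) = 0 ->
 0 < al -> 0 < ga -> ga <= al -> ga*(Lf + al*Lh) <= 1 -> 0 <= Lf -> 0 < Lh -> 0 <= D ->
 D = a + 2*lam*b + lam^+2*r ->
 -(2*b*(al*Lh)) <= r + a*(al*Lh)^+2 ->
 f1 <= f0 + ga*(-a - lam*b) + Lf/2*(ga*ga*D) ->
 h1 <= h0 + ga*(-b - lam*r) + Lh/2*(ga*ga*D) ->
 ga*al*r <= h0 - h1 + Lh/2*ga^+2*D /\
 al*Lh*ga*D <= 4*al*Lh*((f0 + al*h0) - (f1 + al*h1)) + 2*(h0-h1) + 2*ga*al^+3*Lh^+2*C2.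
Proof.
move=> a0 aC r0 l0 L2 L3 al0 ga0 gal gaL Lf0 Lh0 D0 DE am fI hI.
have P1 : 0 <= ga*(lam*r - (al*r - b)) by apply: mulr_ge0; [exact: ltW|rewrite subr_ge0].
have I1 : ga*al*r <= h0 - h1 + Lh/2*ga^+2*D.
  move: hI P1; rewrite expr2; lra.
split => //.
have Q1 : ga*(lam*(lam*r + b - al*r)) = 0 by rewrite L3 mulr0.
have Q2 : 0 <= (1 - ga*(Lf+al*Lh)) * (ga*D).
  by apply: mulr_ge0; [rewrite subr_ge0 | apply: mulr_ge0 => //; exact: ltW].
have Q3 : al*h1 <= al*(h0 + ga*(-b - lam*r) + Lh/2*(ga*ga*D)) by apply: ler_wpM2l => //; exact: ltW.
have DE' : ga*D = ga*(a + 2*lam*b + lam^+2*r) by rewrite DE.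
have E1 : f1 + al*h1 <= f0 + al*h0 - ga*D/2 - ga*al*b.
  move: fI Q1 Q2 Q3 DE'; rewrite !expr2; lra.
have Q4 : al*Lh*(f1 + al*h1) <= al*Lh*(f0 + al*h0 - ga*D/2 - ga*al*b).
  by apply: ler_wpM2l => //; apply: mulr_ge0; exact: ltW.
have Q6 : ga*al/2*(-(2*b*(al*Lh))) <= ga*al/2*(r + a*(al*Lh)^+2).
  by apply: ler_wpM2l => //; apply: divr_ge0 => //; apply: mulr_ge0; exact: ltW.
have Q7 : ga*al^+3*Lh^+2*a <= ga*al^+3*Lh^+2*C2.
  by apply: ler_wpM2l => //; apply: mulr_ge0; [apply: mulr_ge0; [exact: ltW|apply: exprn_ge0; exact: ltW]|apply: exprn_ge0; exact: ltW].
have Q8 : 0 <= (al - ga)*(Lh*ga*D).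
  by apply: mulr_ge0; [rewrite subr_ge0|apply: mulr_ge0 => //; apply: mulr_ge0; exact: ltW].
move: I1 Q4 Q6 Q7 Q8; rewrite !expr2 !exprS expr0 !mulr1; lra.
Qed.
Lemma step n m (f hF : 'rV[R]_n * 'rV[R]_m -> R) (Gfx Hx : 'rV[R]_n * 'rV[R]_m -> 'rV[R]_n)
    (Gfy Hy : 'rV[R]_n * 'rV[R]_m -> 'rV[R]_m) (Lf Lh C2 al ga : R) p :
  has_gradient f Gfx Gfy -> lipschitz_grad Lf Gfx Gfy ->
  has_gradient hF Hx Hy -> lipschitz_grad Lh Hx Hy ->
  psq (Gfx p, Gfy p) <= C2 ->
  0 <= Lf -> 0 < Lh -> 0 < al -> 0 < ga -> ga <= al -> ga * (Lf + al * Lh) <= 1 ->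
  let D := sqn (alg_Dx Gfx Hx Gfy Hy (rhoF Hx Hy) al p)
           + sqn (alg_Dy Gfx Hx Gfy Hy (rhoF Hx Hy) al p) in
  let p' := (p.1 + ga *: alg_Dx Gfx Hx Gfy Hy (rhoF Hx Hy) al p,
             p.2 + ga *: alg_Dy Gfx Hx Gfy Hy (rhoF Hx Hy) al p) in
  ga*al*rhoF Hx Hy p <= hF p - hF p' + Lh/2*ga^+2*D /\
  al*Lh*ga*D <= 4*al*Lh*((f p + al*hF p) - (f p' + al*hF p')) + 2*(hF p - hF p')
                + 2*ga*al^+3*Lh^+2*C2.
Proof.
move=> hgf hlf hgh hlh aC Lf0 Lh0 al0 ga0 gal gaL D p'.
have [l0 [L2 L3]] := lam_facts Gfx Hx Gfy Hy al p.
set lam := alg_lambda Gfx Hx Gfy Hy (rhoF Hx Hy) al p in l0 L2 L3.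
set gh := (Hx p, Hy p) in L2 L3.
set gf := (Gfx p, Gfy p) in aC.
set Dl := (alg_Dx Gfx Hx Gfy Hy (rhoF Hx Hy) al p, alg_Dy Gfx Hx Gfy Hy (rhoF Hx Hy) al p).
have EDl : Dl = - gf - lam *: gh by [].
have DE : D = psq Dl by [].
have fI : f p' <= f p + pdot gf (ga *: Dl) + Lf / 2 * psq (ga *: Dl) := descent p (ga *: Dl) hgf hlf Lf0.
have hI : hF p' <= hF p + pdot gh (ga *: Dl) + Lh / 2 * psq (ga *: Dl)
   := descent p (ga *: Dl) hgh hlh (ltW Lh0).
have Epsq : psq (ga *: Dl) = ga * ga * D by rewrite DE /psq pdotZl pdotZr mulrA.
have E1 : pdot gf Dl = - psq gf - lam * pdot gh gf.
  by rewrite EDl pdotBr pdotNr pdotZr (pdotC gf gh).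
have E2 : pdot gh Dl = - pdot gh gf - lam * psq gh.
  by rewrite EDl pdotBr pdotNr pdotZr.
have E3 : D = psq gf + 2 * lam * pdot gh gf + lam ^+ 2 * psq gh.
  rewrite DE /psq EDl pdotBl !pdotBr pdotNl !pdotNr !pdotZl !pdotZr pdotNl (pdotC gf gh); ring.
have am : -(2 * pdot gh gf * (al * Lh)) <= psq gh + psq gf * (al * Lh) ^+ 2.
  have s0 : 0 < (al * Lh)^-1 by rewrite invr_gt0 mulr_gt0.
  have := amgm gh gf s0.
  have alL : 0 < al * Lh by rewrite mulr_gt0.
  move=> H; have := ler_wpM2l (ltW alL) H.
  have e1 : (al*Lh) * ((al*Lh)^-1 * psq gh + psq gf / (al*Lh)^-1) = psq gh + psq gf * (al*Lh)^+2.
    by field; rewrite !gt_eqF.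
  have e2 : (al*Lh) * (-(2 * pdot gh gf)) = -(2 * pdot gh gf * (al * Lh)) by ring.
  by rewrite e1 e2.
have rE : rhoF Hx Hy p = psq gh by [].
rewrite pdotZr Epsq E1 in fI.
rewrite pdotZr Epsq E2 in hI.
rewrite rE.
apply: (real_step (psq_ge0 gf) aC (psq_ge0 gh) l0 L2 L3 al0 ga0 gal gaL Lf0 Lh0 _ E3 am fI hI).
by rewrite DE psq_ge0.
Qed.
Lemma tele (a u e : nat -> R) K : (forall k, a k <= u k - u k.+1 + e k) ->
  \sum_(k < K) a k <= u 0%N - u K + \sum_(k < K) e k.
Proof.
move=> H; elim: K => [|K IH]; first by rewrite !big_ord0 subrr addr0.
rewrite !big_ord_recr /=; have := H K; lra.
Qed.
Lemma sum_const_ord (e : R) K : \sum_(k < K) e = K%:R * e.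
Proof. by rewrite sumr_const card_ord mulr_natl. Qed.
Lemma core n m (f hF : 'rV[R]_n * 'rV[R]_m -> R) (Gfx Hx : 'rV[R]_n * 'rV[R]_m -> 'rV[R]_n)
    (Gfy Hy : 'rV[R]_n * 'rV[R]_m -> 'rV[R]_m) (Lf Lh Cf C0 fbar F0 al ga : R) x0 y0 (K : nat) :
  has_gradient f Gfx Gfy -> lipschitz_grad Lf Gfx Gfy -> (forall p, fbar <= f p) ->
  (forall p, psq (Gfx p, Gfy p) <= Cf^+2) ->
  has_gradient hF Hx Hy -> lipschitz_grad Lh Hx Hy -> (forall p, 0 <= hF p) ->
  0 <= Lf -> 0 < Lh -> 0 < C0 -> 0 < al -> al <= 1 -> K%:R * al^+3 = 1 ->
  ga = Num.min al (1 / (Lf + al*Lh)) ->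
  hF (x0,y0) <= al^+2*C0 -> f (x0,y0) <= F0 ->
  let T := 1 + Lf + Lh in
  let B := `|F0 - fbar| + C0 in
  let M := T * (4 * B + 2 * C0 / Lh + 2 * Lh * Cf^+2) in
  let M' := T * (C0 + Lh * M / 2) in
  let it := alg_iter Gfx Hx Gfy Hy (rhoF Hx Hy) al ga x0 y0 in
  al * \sum_(k < K) (sqn (alg_Dx Gfx Hx Gfy Hy (rhoF Hx Hy) al (it k))
                    + sqn (alg_Dy Gfx Hx Gfy Hy (rhoF Hx Hy) al (it k))) <= M /\
  al * \sum_(k < K) rhoF Hx Hy (it k) <= M'.
Proof.
move=> hgf hlf fb hCf hgh hlh h0 Lf0 Lh0 C00 al0 al1 Kal gaE h00 f00 T B M M' it.
have Lpos : 0 < Lf + al * Lh by rewrite ltr_pwDr ?mulr_gt0.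
have ga0 : 0 < ga by rewrite gaE lt_min al0 divr_gt0.
have gal : ga <= al by rewrite gaE ge_min lexx.
have gaL : ga * (Lf + al * Lh) <= 1.
  rewrite -(@ler_pdivlMr _ _ _ _ Lpos) mul1r -[X in _ <= X]mul1r; rewrite gaE ge_min.
  by apply/orP; right.
have alT : al <= T * ga.
  rewrite gaE; have [_|H] := leP al (1 / (Lf + al * Lh)).
    have : 0 <= (Lf + Lh) * al by apply: mulr_ge0; [lra | exact: ltW].
    rewrite /T; lra.
  rewrite mul1r ler_pdivlMr //.
  have P1 : 0 <= (1 - al) * Lf by apply: mulr_ge0; lra.
  have P2 : 0 <= (1 - al * al) * Lh.
    apply: mulr_ge0; last lra.
    have : al * al <= 1 * 1 by apply: ler_pM; lra.
    lra.
  rewrite /T; lra.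
pose D k := sqn (alg_Dx Gfx Hx Gfy Hy (rhoF Hx Hy) al (it k))
                    + sqn (alg_Dy Gfx Hx Gfy Hy (rhoF Hx Hy) al (it k)).
pose r k := rhoF Hx Hy (it k).
pose Phi k := f (it k) + al * hF (it k).
have ST k := step hgf hlf hgh hlh (hCf (it k)) Lf0 Lh0 al0 ga0 gal gaL.
have ST' k : ga*al*r k <= hF (it k) - hF (it k.+1) + Lh/2*ga^+2*D k /\
    al*Lh*ga*D k <= 4*al*Lh*(Phi k - Phi k.+1) + 2*(hF (it k) - hF (it k.+1))
       + 2*ga*al^+3*Lh^+2*Cf^+2 := ST k.
have T2 := @tele (fun k => al*Lh*ga*D k) (fun k => 4*al*Lh*Phi k + 2*hF (it k))
   (fun _ => 2*ga*al^+3*Lh^+2*Cf^+2) K (fun k => ltac:(have := (ST' k).2; simpl; lra)).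
have T1 := @tele (fun k => ga*al*r k) (fun k => hF (it k))
   (fun k => Lh/2*ga^+2*D k) K (fun k => ltac:(have := (ST' k).1; simpl; lra)).
rewrite sum_const_ord -mulr_sumr /= in T2.
rewrite -!mulr_sumr /= in T1.
rewrite -/(D _) -/(r _).
set SD := \sum_(k < K) D k in T1 T2 *.
set SR := \sum_(k < K) r k in T1 *.
have SD0 : 0 <= SD by apply: sumr_ge0 => k _; rewrite /D addr_ge0 // sqn_ge0.
have SR0 : 0 <= SR by apply: sumr_ge0 => k _; rewrite /r /rhoF addr_ge0 // sqn_ge0.
have K3 : K%:R * (2*ga*al^+3*Lh^+2*Cf^+2) = 2*ga*Lh^+2*Cf^+2.
  have E : K%:R * (2*ga*al^+3*Lh^+2*Cf^+2) = 2*ga*Lh^+2*Cf^+2 * (K%:R * al^+3) by ring.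
  by rewrite E Kal mulr1.
rewrite K3 in T2.
have it0 : it 0%N = (x0, y0) by [].
have PhiK : fbar <= Phi K.
  rewrite /Phi; have := fb (it K).
  have : 0 <= al * hF (it K) by rewrite mulr_ge0 // ltW.
  lra.
have al3 : al^+3 <= 1 by rewrite exprn_ile1 // ltW.
have al2 : al^+2 <= al by rewrite expr2 ger_pMr.
have Phi0 : Phi 0%N <= F0 + C0.
  rewrite /Phi it0.
  have : al * hF (x0, y0) <= al * (al^+2 * C0) by rewrite ler_wpM2l // ltW.
  have : al^+3 * C0 <= C0 by rewrite ger_pMl.
  rewrite exprS; lra.
have FB : F0 - fbar <= B - C0 by rewrite /B addrK ler_norm.
have hK := h0 (it K).
have h0C : hF (it 0%N) <= al * C0 by rewrite it0; apply: (le_trans h00); rewrite ler_wpM2r // ltW.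
have W1 : al*Lh*ga*SD <= al * (4*Lh*B + 2*C0 + 2*Lh^+2*Cf^+2).
  have a1 : al*Lh*(Phi 0%N - Phi K) <= al*Lh*B.
    apply: ler_wpM2l; [apply: mulr_ge0; exact: ltW | lra].
  have a2 : ga*(Lh^+2*Cf^+2) <= al*(Lh^+2*Cf^+2).
    by apply: ler_wpM2r => //; rewrite mulr_ge0 // sqr_ge0.
  move: T2 a1 a2; lra.
have T0 : 0 <= T by rewrite /T; lra.
set W := 4*Lh*B + 2*C0 + 2*Lh^+2*Cf^+2 in W1.
have SDb : al * SD <= M.
  have b1 : al*(al*Lh*SD) <= T*ga*(al*Lh*SD).
    by apply: ler_wpM2r => //; rewrite !mulr_ge0 // ltW.
  have b2 : T*ga*(al*Lh*SD) <= al*(T*W).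
    have := ler_wpM2l T0 W1; lra.
  have b3 : al*Lh*SD <= T*W.
    rewrite -(ler_pM2l al0); lra.
  have -> : M = T*W / Lh by rewrite /M /W; field; rewrite gt_eqF.
  rewrite ler_pdivlMr //; lra.
split => //.
have c1 : ga^+2*SD <= al^+2*SD.
  apply: ler_wpM2r => //; rewrite !expr2; apply: ler_pM => //; exact: ltW.
have c2 : al^+2*SD <= al*M by rewrite expr2 -mulrA ler_wpM2l // ltW.
have h0' : hF (it 0%N) <= al^+2*C0 by rewrite it0.
have c3 : ga*al*SR <= al^+2*C0 + Lh/2*(al*M).
  have : Lh/2*(ga^+2*SD) <= Lh/2*(al*M).
    by apply: ler_wpM2l; [rewrite divr_ge0 // ltW | exact: le_trans c2].
  lra.
have c4 : al*(al*SR) <= T*ga*(al*SR) by apply: ler_wpM2r => //; rewrite mulr_ge0 // ltW.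
have c5 : T*(ga*al*SR) <= T*(al^+2*C0 + Lh/2*(al*M)) by rewrite ler_wpM2l.
have c6 : al*SR <= T*(al*C0 + Lh*M/2).
  rewrite -(ler_pM2l al0).
  have -> : al*(T*(al*C0 + Lh*M/2)) = T*(al^+2*C0 + Lh/2*(al*M)) by rewrite expr2; field.
  lra.
apply: (le_trans c6); rewrite /M'; apply: ler_wpM2l => //.
have : al*C0 <= C0 by rewrite ger_pMl.
lra.
Qed.
Lemma sqnN n (u : 'rV[R]_n) : sqn (- u) = sqn u.
Proof. by rewrite /sqn dotvNl dotvNr opprK. Qed.
Lemma psqD n m (a b : 'rV[R]_n) (a' b' : 'rV[R]_m) l :
  psq (a + l *: b, a' + l *: b') = sqn (- a - l *: b) + sqn (- a' - l *: b').
Proof. by rewrite -!opprD !sqnN. Qed.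

Lemma alpha_facts (K : nat) : (1 <= K)%N ->
  let al := (K%:R : R) `^ (- (1 / 3)) in
  0 < al /\ al <= 1 /\ (K%:R : R) * al^+3 = 1 /\ (K%:R : R)^-1 = al^+3 /\ (K%:R : R) `^ (- (2 / 3)) = al^+2.
Proof.
move=> K1 al.
have K1' : 1 <= K%:R :> R by rewrite ler1n.
have K0 : 0 < K%:R :> R by apply: lt_le_trans K1'.
have al0 : 0 < al by rewrite powR_gt0.
have a3 : al^+3 = K%:R^-1.
  rewrite -powR_mulrn ?ltW // /al -powRrM.
  have -> : - (1 / 3) * 3%:R = -1 :> R by field.
  by rewrite powR_inv1 // ltW.
split => //; split.
  rewrite /al -[leRHS](powRr0 K%:R); apply: ler_powR => //.
split; first by rewrite a3 mulfV // gt_eqF.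
split => //.
rewrite -powR_mulrn ?ltW // /al -powRrM.
by congr (_ `^ _); field.
Qed.
End Aux.

Unset Implicit Arguments.
Theorem mainTheorem3 (R : realType) (Lf Lh Cf C0 fbar F0 : R) :
  0 <= Lf -> 0 < Lh -> 0 <= Cf -> 0 < C0 ->
  exists c : R, 0 < c /\
  forall (n m : nat) (f g : 'rV[R]_n * 'rV[R]_m -> R)
    (Gfx gx Hx : 'rV[R]_n * 'rV[R]_m -> 'rV[R]_n)
    (Gfy gy Hy : 'rV[R]_n * 'rV[R]_m -> 'rV[R]_m),
  (* f: C^1, inf f = fbar > -oo, grad f Lf-Lipschitz and bounded by Cf *)
  has_gradient f Gfx Gfy ->
  (forall p, fbar <= f p) -> (forall e : R, 0 < e -> exists p, f p < fbar + e) ->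
  lipschitz_grad Lf Gfx Gfy ->
  (forall p, enorm2 (Gfx p, Gfy p) <= Cf) ->
  (* g: twice continuously differentiable with gradient (gx, gy) *)
  has_gradient g gx gy -> C1map gx -> C1map gy ->
  (* h := ||grad_y g||^2 is C^1 with Lh-Lipschitz gradient (Hx, Hy) *)
  has_gradient (fun p => sqn (gy p)) Hx Hy ->
  lipschitz_grad Lh Hx Hy ->
  let h := fun p => sqn (gy p) in
  let rho := fun p => sqn (Hx p) + sqn (Hy p) in
  let alpha := fun K : nat => K%:R `^ (- (1 / 3)) in
  let gamma := fun K : nat => Num.min (alpha K) (1 / (Lf + alpha K * Lh)) in
  let it := fun K x0 y0 => alg_iter Gfx Hx Gfy Hy rho (alpha K) (gamma K) x0 y0 in
  let lam := fun K p => alg_lambda Gfx Hx Gfy Hy rho (alpha K) p in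
  let D := fun K p => sqn (alg_Dx Gfx Hx Gfy Hy rho (alpha K) p)
                      + sqn (alg_Dy Gfx Hx Gfy Hy rho (alpha K) p) in
  (forall (K : nat) (x0 : 'rV[R]_n) (y0 : 'rV[R]_m), (1 <= K)%N ->
     h (x0, y0) <= alpha K ^+ 2 * C0 -> f (x0, y0) <= F0 ->
     K%:R^-1 * \sum_(k < K) D K (it K x0 y0 k) <= c * K%:R `^ (- (2 / 3)) /\
     K%:R^-1 * \sum_(k < K) rho (it K x0 y0 k) <= c * K%:R `^ (- (2 / 3)))
  /\
  (forall eps : R, 0 < eps ->
     exists K : nat, (1 <= K)%N /\ K%:R <= c * eps `^ (- (3 / 2)) + 1 /\
     forall (x0 : 'rV[R]_n) (y0 : 'rV[R]_m),
       h (x0, y0) <= alpha K ^+ 2 * C0 -> f (x0, y0) <= F0 ->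
       exists t : nat, (t < K)%N /\
         Num.max (rho (it K x0 y0 t))
           (enorm2 (Gfx (it K x0 y0 t) + lam K (it K x0 y0 t) *: Hx (it K x0 y0 t),
                    Gfy (it K x0 y0 t) + lam K (it K x0 y0 t) *: Hy (it K x0 y0 t)) ^+ 2)
         <= eps).
Proof.
move=> Lf0 Lh0 Cf0 C00.
pose T := 1 + Lf + Lh.
pose B := `|F0 - fbar| + C0.
pose M := T * (4 * B + 2 * C0 / Lh + 2 * Lh * Cf^+2).
pose M' := T * (C0 + Lh * M / 2).
have T0 : 0 <= T by rewrite /T; lra.
have B0 : 0 <= B by rewrite /B addr_ge0 // ltW.
have M0 : 0 <= M.
  have d1 : 0 <= C0 / Lh by apply: divr_ge0; exact: ltW.
  have d2 : 0 <= Lh * Cf^+2 by apply: mulr_ge0; [exact: ltW | exact: sqr_ge0].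
  apply: mulr_ge0 => //; lra.
have M'0 : 0 <= M'.
  have LM : 0 <= Lh * M := mulr_ge0 (ltW Lh0) M0.
  apply: mulr_ge0 => //; lra.
pose c1 := M + M' + 1.
have c10 : 0 < c1 by rewrite /c1; lra.
pose c := Num.max c1 ((2 * c1) `^ (3 / 2)).
have c1c : c1 <= c by rewrite /c le_max lexx.
exists c; split; first by apply: lt_le_trans c1c.
move=> n m f g Gfx gx Hx Gfy gy Hy hgf fb _ hlf hCf _ _ _ hgh hlh h rho alpha gamma it lam D.
have hCf' : forall p, psq (Gfx p, Gfy p) <= Cf^+2.
  move=> p; rewrite -enorm2_sq ler_pXn2r // nnegrE //.
  by rewrite enorm2E sqrtr_ge0.
have h0 : forall p, 0 <= h p by move=> p; apply: sqn_ge0.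
have key : forall K x0 y0, (1 <= K)%N -> h (x0, y0) <= alpha K ^+ 2 * C0 -> f (x0, y0) <= F0 ->
   alpha K * \sum_(k < K) D K (it K x0 y0 k) <= c1 /\
   alpha K * \sum_(k < K) rho (it K x0 y0 k) <= c1.
  move=> K x0 y0 K1 H1 H2.
  have [al0 [al1 [Kal _]]] := @alpha_facts R K K1.
  have [X Y] := core hgf hlf fb hCf' hgh hlh h0 Lf0 Lh0 C00 al0 al1 Kal erefl H1 H2.
  have Mc : M <= c1 by rewrite /c1; lra.
  have M'c : M' <= c1 by rewrite /c1; lra.
  split; [exact: (le_trans X Mc) | exact: (le_trans Y M'c)].
split.
  move=> K x0 y0 K1 H1 H2.
  have [al0 [al1 [Kal [Kinv K23]]]] := @alpha_facts R K K1.
  have [X Y] := key K x0 y0 K1 H1 H2.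
  rewrite /alpha /= in X Y.
  rewrite Kinv K23.
  set al := (K%:R : R) `^ (-(1/3)) in al0 al1 X Y *.
  have a2 : 0 <= al^+2 by rewrite sqr_ge0.
  have Xc := ler_wpM2l a2 X.
  have Yc := ler_wpM2l a2 Y.
  have cc := ler_wpM2l a2 c1c.
  by split; rewrite exprS; lra.
move=> eps e0.
pose Y := 2 * c1 / eps.
have Y0 : 0 < Y by rewrite /Y divr_gt0 // mulr_gt0.
pose X := Y `^ (3/2).
have X0 : 0 <= X by apply: powR_ge0.
pose K := (Num.truncn X).+1.
exists K.
have K1 : (0 < K)%N by [].
have XK : X < K%:R := truncnS_gt X.
have KX : K%:R <= X + 1.
  rewrite /K -addn1 natrD; have := truncn_itv X0; case/andP => H _; lra.
split => //; split.
  apply: (le_trans KX); rewrite lerD2r.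
  have -> : X = (2 * c1) `^ (3/2) * eps `^ (- (3/2)).
    rewrite /X /Y powRM ?invr_ge0 ?mulr_ge0 ?ltW //.
    by rewrite -(powR_inv1 (ltW e0)) -powRrM mulN1r.
  by apply: ler_wpM2r; [exact: powR_ge0 | rewrite /c le_max lexx orbT].
move=> x0 y0 H1 H2.
have [al0 [al1 [Kal [Kinv K23]]]] := @alpha_facts R K K1.
have [SX SY] := key K x0 y0 K1 H1 H2.
rewrite /alpha /= in SX SY.
set al := (K%:R : R) `^ (-(1/3)) in al0 al1 SX SY Kal Kinv K23 *.
have K0 : 0 < K%:R :> R by rewrite ltr0n.
have alY : al^+2 < Y^-1.
  rewrite -K23 powRN.
  have HX : X `^ (2/3) < (K%:R : R) `^ (2/3).
    apply: gt0_ltr_powR => //; rewrite nnegrE ltW //.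
  have EX : X `^ (2/3) = Y.
    by rewrite /X -powRrM (_ : 3/2 * (2/3) = 1) ?powRr1 ?ltW //; field.
  rewrite EX in HX.
  rewrite ltf_pV2 ?posrE //; exact: powR_gt0.
have alE : al^+2 * (2 * c1) < eps.
  by move: alY; rewrite /Y invf_div ltr_pdivlMr // mulr_gt0.
set SD := \sum_(k < K) D K (it K x0 y0 k) in SX.
set SR := \sum_(k < K) rho (it K x0 y0 k) in SY.
case: (boolP [exists t : 'I_K, rho (it K x0 y0 t) + D K (it K x0 y0 t) <= eps]).
  move/existsP => [t Ht]; exists t; split; first exact: ltn_ord.
  have E2 : enorm2 (Gfx (it K x0 y0 t) + lam K (it K x0 y0 t) *: Hx (it K x0 y0 t),
              Gfy (it K x0 y0 t) + lam K (it K x0 y0 t) *: Hy (it K x0 y0 t)) ^+ 2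
            = D K (it K x0 y0 t) by rewrite enorm2_sq; apply: psqD.
  rewrite E2 ge_max.
  have r0 : 0 <= rho (it K x0 y0 t) by rewrite addr_ge0 // sqn_ge0.
  have d0 : 0 <= D K (it K x0 y0 t) by rewrite addr_ge0 // sqn_ge0.
  apply/andP; split; lra.
move/existsPn => Hn; exfalso.
have HS : K%:R * eps <= SR + SD.
  rewrite -sum_const_ord /SR /SD -big_split; apply: ler_sum => k _.
  by have := Hn k; rewrite -ltNge => /ltW.
have a3 : 0 <= al^+3 by rewrite exprn_ge0 // ltW.
have P := ler_wpM2l a3 HS.
have E : al^+3 * (K%:R * eps) = eps by rewrite mulrA [al^+3 * _]mulrC Kal mul1r.
have a2 : 0 <= al^+2 by rewrite sqr_ge0.
have Q1 := ler_wpM2l a2 SX.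
have Q2 := ler_wpM2l a2 SY.
move: P Q1 Q2 alE; rewrite E !exprS expr0 !mulr1; lra.
Qed.
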